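(* Let $A$, $B$, $C$, and $D$ be finite posets, with $A$ connected and non-empty. Assume that $A\times B\cong C\times D$. Then there exist posets $W$, $X$, $Y$, and $Z$ such that $A\cong W\times X$, $B\cong Y\times Z$, $C\cong W\times Y$, and $D\cong X\times Z$.
   Context: Products of posets are ordered componentwise; posets may be empty. *)

(* Defs.v *)
From HB Require Import structures.
From mathcomp Require Import all_boot all_order.
Set Implicit Arguments. Unset Strict Implicit. Unset Printing Implicit Defensive.
Import Order.Theory.
Local Open Scope order_scope.

Definition order_iso (d1 d2 : Order.disp_t) (T1 : porderType d1) (T2 : porderType d2) : Prop :=
  exists f : T1 -> T2, bijective f /\ forall x y : T1, (f x <= f y) = (x <= y).

Definition poset_connected (d : Order.disp_t) (T : finPOrderType d) : Prop :=
  forall x y : T, connect (fun a b : T => (a <= b) || (b <= a)) x y.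

(* Main.v *)
Require Import Defs.
From HB Require Import structures.
From mathcomp Require Import all_boot all_order.
From Stdlib Require Import Classical.
Set Implicit Arguments. Unset Strict Implicit. Unset Printing Implicit Defensive.
Import Order.Theory.
Local Open Scope order_scope.

Definition subp (d : Order.disp_t) (T : finPOrderType d) (P : pred T) : Type := {x : T | P x}.
HB.instance Definition _ d T P := [isSub of @subp d T P for @proj1_sig T (fun x => P x)].
HB.instance Definition _ d T P := [Finite of @subp d T P by <:].
HB.instance Definition _ d T P := [SubChoice_isSubPOrder of @subp d T P by <: with d].

Section Iso.
Context {d1 d2 d3 d4 d5 d6 : Order.disp_t}.

Lemma iso_refl (A : porderType d1) : order_iso A A.
Proof. exists id; split => //; exact: (Bijective (g:=id)). Qed.

Lemma iso_sym (A : porderType d1) (B : porderType d2) : order_iso A B -> order_iso B A.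
Proof.
case=> f [[g fg gf] fle]; exists g; split; first exact: (Bijective gf fg).
by move=> x y; rewrite -fle !gf.
Qed.

Lemma iso_trans (A : porderType d1) (B : porderType d2) (C : porderType d3) :
  order_iso A B -> order_iso B C -> order_iso A C.
Proof.
case=> f [fb fle] [g [gb gle]]; exists (g \o f); split; first exact: bij_comp.
by move=> x y /=; rewrite gle fle.
Qed.

Lemma iso_prod (A : porderType d1) (B : porderType d2) (A' : porderType d3) (B' : porderType d4) :
  order_iso A A' -> order_iso B B' -> order_iso (A *p B) (A' *p B').
Proof.
case=> f [[f' ff' f'f] fle] [g [[g' gg' g'g] gle]].
exists (fun x : A *p B => ((f x.1, g x.2) : A' *p B')); split.
  exists (fun y : A' *p B' => ((f' y.1, g' y.2) : A *p B)).
    by case=> x1 x2 /=; rewrite ff' gg'.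
  by case=> x1 x2 /=; rewrite f'f g'g.
by case=> x1 x2 [y1 y2]; rewrite /= !le_pair fle gle.
Qed.

Lemma iso_comm (A : porderType d1) (B : porderType d2) : order_iso (A *p B) (B *p A).
Proof.
exists (fun x : A *p B => ((x.2, x.1) : B *p A)); split.
  by exists (fun y : B *p A => ((y.2, y.1) : A *p B)); case.
by case=> x1 x2 [y1 y2]; rewrite /= !le_pair andbC.
Qed.

Lemma iso_assoc (A : porderType d1) (B : porderType d2) (C : porderType d3) :
  order_iso ((A *p B) *p C) (A *p (B *p C)).
Proof.
exists (fun x : (A *p B) *p C => ((x.1.1, ((x.1.2, x.2) : B *p C)) : A *p (B *p C))); split.
  by exists (fun y : A *p (B *p C) => ((((y.1, y.2.1) : A *p B), y.2.2) : (A *p B) *p C)); [case=> [[]] | case=> ? []].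
by case=> [[x1 x2] x3] [[y1 y2] y3]; rewrite /= !le_pair andbA.
Qed.

Lemma iso_unitr (A : porderType d1) : order_iso A (A *p 'I_1).
Proof.
exists (fun x : A => ((x, ord0) : A *p 'I_1)); split.
  exists (fun y : A *p 'I_1 => y.1) => //.
  by case=> x i /=; congr pair; apply/val_inj; case: i => [[]].
by move=> x y; rewrite le_pair lexx andbT.
Qed.

End Iso.

Lemma iso_unitl d1 (A : porderType d1) : order_iso A ('I_1 *p A).
Proof. exact: iso_trans (iso_unitr A) (iso_comm _ _). Qed.

Lemma iso_card d1 d2 (A : finPOrderType d1) (B : finPOrderType d2) :
  order_iso A B -> #|A| = #|B|.
Proof. by case=> f [fb _]; exact: (bij_eq_card fb). Qed.

Lemma card_p d1 d2 (A : finPOrderType d1) (B : finPOrderType d2) :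
  #|{: A *p B}| = (#|A| * #|B|)%N.
Proof. exact: card_prod. Qed.

Section Hom.
Definition homok (T : finType) (r : rel T) d (B : finPOrderType d) (phi : {ffun T -> B}) :=
  [forall x, forall y, r x y ==> (phi x <= phi y)].
Definition Fok (T : finType) (F : {set T * T}) d (B : finPOrderType d) (phi : {ffun T -> B}) :=
  [forall p in F, phi p.1 != phi p.2].
Definition Gset (T : finType) (r : rel T) (F : {set T * T}) d (B : finPOrderType d) :=
  [set phi : {ffun T -> B} | homok r phi && Fok F phi].
Definition G (T : finType) (r : rel T) (F : {set T * T}) d (B : finPOrderType d) :=
  #|Gset r F B|.
End Hom.

Lemma G_iso (T : finType) (r : rel T) (F : {set T * T}) d1 d2
  (X : finPOrderType d1) (Y : finPOrderType d2) : order_iso X Y -> G r F X = G r F Y.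
Proof.
case=> e [[e' ee' e'e] ele].
have einj : injective e by apply: can_inj ee'.
rewrite /G -(card_imset _ (f := fun phi : {ffun T -> X} => [ffun x => e (phi x)])); last first.
  by move=> p q /ffunP E; apply/ffunP => x; have := E x; rewrite !ffunE => /einj.
apply: eq_card => psi; apply/imsetP/idP.
  case=> phi; rewrite !inE => /andP[hp fp] ->; apply/andP; split.
    by apply/forallP => x; apply/forallP => y; rewrite !ffunE ele; exact: (forallP (forallP hp x) y).
  by apply/forall_inP => p pF; rewrite !ffunE (inj_eq einj); exact: (forall_inP fp p pF).
rewrite inE => /andP[hp fp]; exists [ffun x => e' (psi x)].
  rewrite inE; apply/andP; split.
    apply/forallP => x; apply/forallP => y; rewrite !ffunE -ele !e'e.
    exact: (forallP (forallP hp x) y).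
  apply/forall_inP => p pF; rewrite !ffunE; apply: contra (forall_inP fp p pF).
  by move/eqP => E; rewrite -[psi p.1]e'e -[psi p.2]e'e E.
by apply/ffunP => x; rewrite !ffunE e'e.
Qed.

Lemma G_prod (T : finType) (r : rel T) d1 d2 (X : finPOrderType d1) (Y : finPOrderType d2) :
  G r set0 (X *p Y) = (G r set0 X * G r set0 Y)%N.
Proof.
rewrite /G -cardX.
pose sp := fun phi : {ffun T -> X *p Y} =>
  ([ffun x => (phi x).1], [ffun x => (phi x).2]) : {ffun T -> X} * {ffun T -> Y}.
rewrite -(card_imset _ (f := sp)); last first.
  move=> p q [E1 E2]; apply/ffunP => x.
  move/ffunP/(_ x): E1; move/ffunP/(_ x): E2.
  rewrite !ffunE; case: (p x) => ??; case: (q x) => ?? /= -> -> //.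
apply: eq_card => -[u v]; apply/imsetP/idP.
  have F0 d (Z : finPOrderType d) (f : {ffun T -> Z}) : Fok set0 f.
    by apply/forall_inP => p; rewrite inE.
  case=> phi; rewrite !inE => /andP[hp _] [-> ->] /=; rewrite !F0 !andbT.
  apply/andP; split; apply/forallP => x; apply/forallP => y; apply/implyP => rxy;
    have := implyP (forallP (forallP hp x) y) rxy; rewrite !ffunE leEprod => /andP[] //.
rewrite !inE => /andP[/andP[hu _] /andP[hv _]].
exists [ffun x => ((u x, v x) : X *p Y)].
  rewrite inE; apply/andP; split; last by apply/forall_inP => p; rewrite inE.
  apply/forallP => x; apply/forallP => y; apply/implyP => rxy; rewrite !ffunE le_pair.
  by rewrite (implyP (forallP (forallP hu x) y) rxy) (implyP (forallP (forallP hv x) y) rxy).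
by congr pair; apply/ffunP => x; rewrite !ffunE.
Qed.

Lemma G_pos (T : finType) (r : rel T) d (X : finPOrderType d) (x0 : X) : (0 < G r set0 X)%N.
Proof.
apply/card_gt0P; exists [ffun _ => x0]; rewrite inE; apply/andP; split.
  by apply/forallP => x; apply/forallP => y; rewrite !ffunE lexx implybT.
by apply/forall_inP => p; rewrite inE.
Qed.

Lemma G_split (T : finType) (r : rel T) (F : {set T * T}) d (B : finPOrderType d) (p : T * T) :
  G r F B = (G r (p |: F) B + #|[set phi in Gset r F B | phi p.1 == phi p.2]|)%N.
Proof.
rewrite /G -(cardsID [set phi : {ffun T -> B} | phi p.1 == phi p.2] (Gset r F B)) addnC.
congr (_ + _)%N; last first.
  by apply: eq_card => phi; rewrite !inE andbC.
apply: eq_card => phi; rewrite !inE /Fok.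
case: (homok r phi) => /=; last by rewrite andbF.
apply/andP/forall_inP.
  case=> /negbTE Hn /forall_inP fp q; rewrite !inE => /orP[/eqP -> | qF]; first by rewrite Hn.
  exact: fp.
move=> fp; split.
  by apply: fp; rewrite !inE eqxx.
by apply/forall_inP => q qF; apply: fp; rewrite inE qF orbT.
Qed.

Section Merge.
Variables (T : finType) (i j : T) (ij : i != j).
Definition T' := {x : T | x != j}.
Definition i' : T' := exist _ i ij.
Definition mrg (x : T) : T' := odflt i' (insub x).
Lemma val_mrg x : val (mrg x) = if x == j then i else x.
Proof.
rewrite /mrg; case: insubP => [u Hu Hv | Hn] /=; first by rewrite Hv (negbTE Hu).
by rewrite negbK in Hn; rewrite Hn.
Qed.
Lemma mrg_val (u : T') : mrg (val u) = u.
Proof. by apply: val_inj; rewrite val_mrg (negbTE (valP u)). Qed.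
Lemma card_T' : (#|{: T'}| < #|T|)%N.
Proof.
rewrite card_sig; have := cardC1 j; rewrite /= => E.
have -> : #|[pred x | x != j]| = #|predC1 j| by apply: eq_card.
rewrite E; have : (0 < #|T|)%N by apply/card_gt0P; exists j.
by case: #|T|.
Qed.

Variables (r : rel T) (F : {set T * T}).
Definition r' : rel T' := fun u v => [exists x, exists y, [&& mrg x == u, mrg y == v & r x y]].
Definition F' : {set T' * T'} := [set (mrg p.1, mrg p.2) | p in F].

Lemma merge_card d (B : finPOrderType d) :
  #|[set phi in Gset r F B | phi i == phi j]| = G r' F' B.
Proof.
have mi : injective (fun psi : {ffun T' -> B} => [ffun x => psi (mrg x)]).
  move=> p q /ffunP E; apply/ffunP => u; have := E (val u); rewrite !ffunE mrg_val //.
rewrite /G -(card_imset _ mi); apply: eq_card => phi; apply/idP/imsetP.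
  rewrite !inE => /andP[/andP[hp fp] eij].
  have phim x : phi x = phi (val (mrg x)).
    by rewrite val_mrg; case: eqP => // ->; rewrite (eqP eij).
  exists [ffun u => phi (val u)].
    rewrite inE; apply/andP; split.
      apply/forallP => u; apply/forallP => v; apply/implyP => /existsP[x /existsP[y /and3P[/eqP <- /eqP <- rxy]]].
      by rewrite !ffunE -!phim; exact: (implyP (forallP (forallP hp x) y) rxy).
    apply/forall_inP => q /imsetP[p pF ->] /=; rewrite !ffunE -!phim.
    exact: (forall_inP fp p pF).
  by apply/ffunP => x; rewrite !ffunE -phim.
case=> psi; rewrite !inE => /andP[hp fp] ->; rewrite !ffunE.
have -> : mrg i = mrg j.
  by apply: val_inj; rewrite !val_mrg eqxx (negbTE ij).
rewrite eqxx andbT; apply/andP; split.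
  apply/forallP => x; apply/forallP => y; apply/implyP => rxy; rewrite !ffunE.
  apply: (implyP (forallP (forallP hp _) _)); apply/existsP; exists x; apply/existsP; exists y.
  by rewrite !eqxx rxy.
apply/forall_inP => p pF; rewrite !ffunE.
have := forall_inP fp (mrg p.1, mrg p.2); apply; apply/imsetP; by exists p.
Qed.
End Merge.

Section Canc.
Variables (d1 d2 : Order.disp_t) (B1 : finPOrderType d1) (B2 : finPOrderType d2).
Hypothesis Hhom : forall (T : finType) (r : rel T), G r set0 B1 = G r set0 B2.

Lemma G_eq_all n : forall (T : finType), (#|T| <= n)%N ->
  forall (r : rel T) (F : {set T * T}), G r F B1 = G r F B2.
Proof.
elim: n => [|n IHn] T Tn r.
  move=> F; have T0 : #|T| = 0%N by apply/eqP; rewrite -leqn0.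
  have e0 : forall x : T, False by move=> x; have := card0_eq T0 x.
  suff -> : F = set0 by apply: Hhom.
  by apply/setP => p; case: (e0 p.1).
move=> F; move: {2}#|F| (leqnn #|F|) => k; elim: k F => [|k IHk] F Fk.
  have -> : F = set0 by apply/eqP; rewrite -cards_eq0 -leqn0.
  exact: Hhom.
case: (set_0Vmem F) => [-> | [p pF]]; first exact: Hhom.
have -> : F = p |: (F :\ p) by rewrite setD1K.
have Fk' : (#|F :\ p| <= k)%N.
  by have := cardsD1 p F; rewrite pF /= => E; move: Fk; rewrite E.
case: (eqVneq p.1 p.2) => [Ep | Np].
  suff G0 d (B : finPOrderType d) : G r (p |: F :\ p) B = 0%N by rewrite !G0.
  apply/eqP; rewrite cards_eq0; apply/eqP/setP => phi; rewrite !inE.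
  apply/negbTE; rewrite negb_and; apply/orP; right.
  by apply/forall_inP => /(_ p); rewrite !inE eqxx Ep eqxx => /(_ isT).
have E d (B : finPOrderType d) := G_split r (F :\ p) B p.
have := E _ B1; have := E _ B2.
rewrite (merge_card Np) (merge_card Np) => e2 e1.
have Hm : G (@r' T p.1 p.2 Np r) (@F' T p.1 p.2 Np (F :\ p)) B1 = G (@r' T p.1 p.2 Np r) (@F' T p.1 p.2 Np (F :\ p)) B2.
  apply: IHn; have := @card_T' T p.2 => h; rewrite -ltnS; exact: leq_trans h Tn.
have := IHk _ Fk'; rewrite e1 e2 Hm => /eqP; rewrite eqn_add2r => /eqP //.
Qed.
End Canc.

Lemma iso_of_injmono d1 d2 (B1 : finPOrderType d1) (B2 : finPOrderType d2)
  (phi : B1 -> B2) (psi : B2 -> B1) : injective phi -> injective psi ->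
  (forall x y, x <= y -> phi x <= phi y) -> (forall x y, x <= y -> psi x <= psi y) ->
  order_iso B1 B2.
Proof.
move=> iphi ipsi mphi mpsi.
have c12 := leq_card phi iphi; have c21 := leq_card psi ipsi.
exists phi; split; first exact: inj_card_bij.
pose L d (B : finPOrderType d) := [set u : B * B | u.1 <= u.2].
pose f2 := fun u : B1 * B1 => (phi u.1, phi u.2).
pose g2 := fun u : B2 * B2 => (psi u.1, psi u.2).
have if2 : injective f2 by move=> [? ?] [? ?] [/iphi -> /iphi ->].
have ig2 : injective g2 by move=> [? ?] [? ?] [/ipsi -> /ipsi ->].
have s1 : f2 @: L _ B1 \subset L _ B2.
  by apply/subsetP => v /imsetP[u]; rewrite !inE => le ->; exact: mphi.
have s2 : g2 @: L _ B2 \subset L _ B1.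
  by apply/subsetP => v /imsetP[u]; rewrite !inE => le ->; exact: mpsi.
have e1 := subset_leq_card s1; have e2 := subset_leq_card s2.
rewrite card_imset // in e1; rewrite card_imset // in e2.
have : #|f2 @: L _ B1| = #|L _ B2| by rewrite card_imset //; apply/eqP; rewrite eqn_leq e1 e2.
move=> ce; have := subset_leqif_cards s1; rewrite ce => /leqif_refl /eqP EL.
move=> x y; apply/idP/idP; last exact: mphi.
move=> le; have : (phi x, phi y) \in L _ B2 by rewrite inE.
by rewrite -EL => /imsetP[[u v]]; rewrite inE /= => uv [] /iphi eu /iphi ev; rewrite eu ev.
Qed.

Lemma cancellation d0 d1 d2 (A : finPOrderType d0) (B1 : finPOrderType d1) (B2 : finPOrderType d2) :
  (0 < #|A|)%N -> order_iso (A *p B1) (A *p B2) -> order_iso B1 B2.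
Proof.
move=> /card_gt0P[a0 _] iso.
have H d d' (X : finPOrderType d) (Y : finPOrderType d') :
    (forall (T : finType) (r : rel T), G r set0 X = G r set0 Y) ->
    exists phi : X -> Y, injective phi /\ forall x y, x <= y -> phi x <= phi y.
  move=> Hh; pose F := [set p : X * X | p.1 != p.2].
  have := G_eq_all Hh (leqnn _) (fun x y : X => x <= y) F.
  have : (0 < G (fun x y : X => (x <= y)%O) F X)%N.
    apply/card_gt0P; exists [ffun x => x]; rewrite inE; apply/andP; split.
      by apply/forallP => x; apply/forallP => y; rewrite !ffunE implybb.
    by apply/forall_inP => p; rewrite inE !ffunE.
  move=> pos E; rewrite E in pos; case/card_gt0P: pos => phi; rewrite inE => /andP[hp fp].
  exists phi; split.
    move=> x y exy; apply/eqP; rewrite -[_ == _]negbK; apply/negP => nxy.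
    by have := forall_inP fp (x, y); rewrite inE /= => /(_ nxy); rewrite exy eqxx.
  by move=> x y le; exact: (implyP (forallP (forallP hp x) y) le).
have Hh : forall (T : finType) (r : rel T), G r set0 B1 = G r set0 B2.
  move=> T r; have := G_iso r set0 iso; rewrite !G_prod => /eqP.
  by rewrite eqn_mul2l (negbTE (lt0n_neq0 (G_pos r a0))) => /eqP.
have [phi [ip mp]] := H _ _ _ _ Hh.
have [psi [iq mq]] := H _ _ _ _ (fun T r => esym (Hh T r)).
exact: iso_of_injmono ip iq mp mq.
Qed.

Definition cmp d (T : porderType d) (x y : T) := (x <= y) || (y <= x).

Lemma connect_tr (T : finType) (e : rel T) (P : T -> Prop) x y :
  connect e x y -> P x -> (forall u v, e u v -> P u -> P v) -> P y.
Proof.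
case/connectP=> s; elim: s x => [|z s IH] x /=; first by move=> _ -> .
by case/andP=> exz pz ly Px st; apply: (IH z pz ly (st _ _ exz Px) st).
Qed.

Record isoD dA dB dC dD (A : finPOrderType dA) (B : finPOrderType dB)
  (C : finPOrderType dC) (D : finPOrderType dD) := IsoD {
  fg : A -> B -> C; fh : A -> B -> D; fp : C -> D -> A; fq : C -> D -> B;
  pq_g : forall c d, fg (fp c d) (fq c d) = c;
  pq_h : forall c d, fh (fp c d) (fq c d) = d;
  gh_p : forall a b, fp (fg a b) (fh a b) = a;
  gh_q : forall a b, fq (fg a b) (fh a b) = b;
  ord : forall a b a' b', ((fg a b <= fg a' b') && (fh a b <= fh a' b')) = ((a <= a') && (b <= b'))
}.

Section Swap.
Variables (dA dB dC dD : Order.disp_t).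
Variables (A : finPOrderType dA) (B : finPOrderType dB) (C : finPOrderType dC) (D : finPOrderType dD).
Variable I : isoD A B C D.
Definition swCD : isoD A B D C.
Proof.
refine (@IsoD _ _ _ _ A B D C (fh I) (fg I) (fun d c => fp I c d) (fun d c => fq I c d) _ _ _ _ _).
- by move=> d c; rewrite pq_h.
- by move=> d c; rewrite pq_g.
- by move=> a b; rewrite gh_p.
- by move=> a b; rewrite gh_q.
- by move=> a b a' b'; rewrite andbC ord.
Defined.
Definition swAB : isoD B A C D.
Proof.
refine (@IsoD _ _ _ _ B A C D (fun b a => fg I a b) (fun b a => fh I a b) (fq I) (fp I) _ _ _ _ _).
- by move=> c d; rewrite pq_g.
- by move=> c d; rewrite pq_h.
- by move=> b a; rewrite gh_q.
- by move=> b a; rewrite gh_p.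
- by move=> b a b' a'; rewrite ord andbC.
Defined.
End Swap.

Section Core.
Variables (dA dB dC dD : Order.disp_t).
Variables (A : finPOrderType dA) (B : finPOrderType dB) (C : finPOrderType dC) (D : finPOrderType dD).
Variable I : isoD A B C D.
Local Notation g := (fg I). Local Notation h := (fh I).
Local Notation p := (fp I). Local Notation q := (fq I).
Let pq_g := pq_g I. Let pq_h := pq_h I. Let gh_p := gh_p I. Let gh_q := gh_q I. Let ord := ord I.

Lemma monoG a b a' b' : a <= a' -> b <= b' -> g a b <= g a' b'.
Proof. by move=> e1 e2; have := ord a b a' b'; rewrite e1 e2 => /andP[]. Qed.
Lemma monoH a b a' b' : a <= a' -> b <= b' -> h a b <= h a' b'.
Proof. by move=> e1 e2; have := ord a b a' b'; rewrite e1 e2 => /andP[]. Qed.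
Lemma reflA a b a' b' : g a b <= g a' b' -> h a b <= h a' b' -> a <= a'.
Proof. by move=> e1 e2; have := ord a b a' b'; rewrite e1 e2 => /esym/andP[]. Qed.
Lemma reflB a b a' b' : g a b <= g a' b' -> h a b <= h a' b' -> b <= b'.
Proof. by move=> e1 e2; have := ord a b a' b'; rewrite e1 e2 => /esym/andP[]. Qed.
Lemma monoP c d c' d' : c <= c' -> d <= d' -> p c d <= p c' d'.
Proof. by move=> e1 e2; apply: (reflA (b := q c d) (b' := q c' d')); rewrite ?pq_g ?pq_h. Qed.
Lemma monoQ c d c' d' : c <= c' -> d <= d' -> q c d <= q c' d'.
Proof. by move=> e1 e2; apply: (reflB (a := p c d) (a' := p c' d')); rewrite ?pq_g ?pq_h. Qed.
Lemma finjA a b a' b' : g a b = g a' b' -> h a b = h a' b' -> a = a'.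
Proof. by move=> e1 e2; rewrite -(gh_p a b) e1 e2 gh_p. Qed.
Lemma finjB a b a' b' : g a b = g a' b' -> h a b = h a' b' -> b = b'.
Proof. by move=> e1 e2; rewrite -(gh_q a b) e1 e2 gh_q. Qed.

Lemma TI1 a a' b b' : a <= a' -> b <= b' -> g a b = g a b' -> g a' b = g a' b'.
Proof.
move=> aa bb E.
pose m1 := p (g a' b) (h a' b'); pose m2 := q (g a' b) (h a' b').
have hm : h a' b <= h a' b' by apply: monoH.
have l1 : a' <= m1 by apply: (reflA (b := b) (b' := m2)); rewrite /m1 /m2 ?pq_g ?pq_h.
have l2 : b' <= m2.
  apply: (reflB (a := a) (a' := m1)); rewrite /m1 /m2 ?pq_g ?pq_h; last exact: monoH.
  by rewrite -E; apply: monoG.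
have l3 : a <= m1.
  apply: (reflA (b := b') (b' := m2)); rewrite /m1 /m2 ?pq_g ?pq_h; last exact: monoH.
  by rewrite -E; apply: monoG.
have : g a' b' <= g m1 m2 by apply: monoG.
rewrite /m1 /m2 pq_g => le1.
by apply/le_anti; rewrite le1 monoG.
Qed.

Lemma TI2 a a' b b' : a <= a' -> b <= b' -> g a' b = g a' b' -> g a b = g a b'.
Proof.
move=> aa bb E.
pose m1 := p (g a b') (h a b); pose m2 := q (g a b') (h a b).
have l1 : m1 <= a.
  by apply: (reflA (b := m2) (b' := b')); rewrite /m1 /m2 ?pq_g ?pq_h //; apply: monoH.
have l2 : m2 <= b.
  apply: (reflB (a := m1) (a' := a')); rewrite /m1 /m2 ?pq_g ?pq_h; last exact: monoH.
  by rewrite E; apply: monoG.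
have : g m1 m2 <= g a b by apply: monoG.
rewrite /m1 /m2 pq_g => le1.
by apply/le_anti; rewrite le1 monoG.
Qed.

Hypothesis conA : poset_connected A.

Lemma L2 a a' b b' : b <= b' -> g a b = g a b' -> g a' b = g a' b'.
Proof.
move=> bb E; apply: (connect_tr (P := fun x => g x b = g x b') (conA a a')) => // u v.
case/orP => uv; [exact: TI1 | exact: TI2].
Qed.

Lemma L2' a a' b b' : cmp b b' -> g a b = g a b' -> g a' b = g a' b'.
Proof.
case/orP => bb E; first exact: L2 E.
by apply/esym; apply: (@L2 a a' b' b bb); rewrite E.
Qed.

End Core.

Section Core2.
Variables (dA dB dC dD : Order.disp_t).
Variables (A : finPOrderType dA) (B : finPOrderType dB) (C : finPOrderType dC) (D : finPOrderType dD).
Variable I : isoD A B C D.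
Local Notation g := (fg I). Local Notation h := (fh I).
Local Notation p := (fp I). Local Notation q := (fq I).
Hypothesis conA : poset_connected A.

Lemma Kstep u v d : cmp u v -> forall a, h a (q u d) = h a (q v d).
Proof.
have key u' v' : u' <= v' -> forall a, h a (q u' d) = h a (q v' d).
  move=> uv a.
  have x12 : p u' d <= p v' d by apply: (monoP I).
  have y12 : q u' d <= q v' d by apply: (monoQ I).
  have e : h (p v' d) (q u' d) = h (p v' d) (q v' d).
    apply/le_anti; rewrite (monoH I) //=.
    by rewrite (pq_h I v' d) -{1}(pq_h I u' d) (monoH I).
  exact: (@L2' _ _ _ _ _ _ _ _ (swCD I) conA (p v' d) a _ _ (introT orP (or_introl y12)) e).
case/orP=> [uv | vu] a; first exact: key.
by rewrite (key _ _ vu).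
Qed.

Lemma L3 c c' d : connect (fun x y : C => (x <= y) || (y <= x)) c c' ->
  forall a, h a (q c d) = h a (q c' d).
Proof.
move=> cc; apply: (connect_tr (P := fun c'' => forall a, h a (q c d) = h a (q c'' d)) cc) => // u v uv Pu a.
by rewrite Pu; apply: Kstep.
Qed.

Lemma L4 a a' b : connect (fun x y : C => (x <= y) || (y <= x)) (g a b) (g a' b).
Proof.
apply: (connect_tr (P := fun x => connect _ (g a b) (g x b)) (conA a a')) => // u v uv Pu.
apply: connect_trans Pu (connect1 _).
by case/orP: uv => uv; apply/orP; [left | right]; apply: (monoG I).
Qed.

End Core2.

Section Core3.
Variables (dA dB dC dD : Order.disp_t).
Variables (A : finPOrderType dA) (B : finPOrderType dB) (C : finPOrderType dC) (D : finPOrderType dD).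
Variable I : isoD A B C D.
Local Notation g := (fg I). Local Notation h := (fh I).
Local Notation p := (fp I). Local Notation q := (fq I).
Hypothesis conA : poset_connected A.

Lemma SB a1 a2 b : q (g a1 b) (h a2 b) = b.
Proof.
have eh a : h a (q (g a1 b) (h a2 b)) = h a b.
  by rewrite (L3 I conA (h a2 b) (L4 I conA a1 a2 b)) gh_q.
have eg a : g a (q (g a1 b) (h a2 b)) = g a b.
  have := L3 (swCD I) conA (g a1 b) (L4 (swCD I) conA a2 a1 b) a; rewrite /= => ->.
  by rewrite gh_q.
exact: (finjB (eg a1) (eh a1)).
Qed.

Lemma SB_g a1 a2 b : g (p (g a1 b) (h a2 b)) b = g a1 b.
Proof. by have := pq_g I (g a1 b) (h a2 b); rewrite SB. Qed.
Lemma SB_h a1 a2 b : h (p (g a1 b) (h a2 b)) b = h a2 b.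
Proof. by have := pq_h I (g a1 b) (h a2 b); rewrite SB. Qed.

Lemma L6 b a0 : order_iso A (subp [pred a : A | h a b == h a0 b] *p subp [pred a : A | g a b == g a0 b]).
Proof.
pose mix a1 a2 := p (g a1 b) (h a2 b).
have mg a1 a2 : g (mix a1 a2) b = g a1 b by exact: SB_g.
have mh a1 a2 : h (mix a1 a2) b = h a2 b by exact: SB_h.
have mixle a1 a2 a1' a2' : (mix a1 a2 <= mix a1' a2') = (g a1 b <= g a1' b) && (h a2 b <= h a2' b).
  by have := ord I (mix a1 a2) b (mix a1' a2') b; rewrite !mg !mh lexx andbT.
have pW a : [pred a : A | h a b == h a0 b] (mix a a0) by rewrite /= mh.
have pX a : [pred a : A | g a b == g a0 b] (mix a0 a) by rewrite /= mg.
exists (fun a => ((exist _ (mix a a0) (pW a) : subp _), (exist _ (mix a0 a) (pX a) : subp _))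
  : subp [pred a : A | h a b == h a0 b] *p subp [pred a : A | g a b == g a0 b]); split.
  exists (fun u : subp [pred a : A | h a b == h a0 b] *p subp [pred a : A | g a b == g a0 b] =>
      mix (val u.1) (val u.2)).
    by move=> a; rewrite /mix mg mh gh_p.
  case=> [[w wW] [x xX]] /=; congr pair; apply: val_inj => /=; rewrite /mix.
    by rewrite mg -(eqP wW) gh_p.
  by rewrite mh -(eqP xX) gh_p.
move=> a a'; rewrite le_pair.
have -> : ((exist _ (mix a a0) (pW a) : subp [pred a : A | h a b == h a0 b]) <= exist _ (mix a' a0) (pW a')) = (mix a a0 <= mix a' a0) by [].
have -> : ((exist _ (mix a0 a) (pX a) : subp [pred a : A | g a b == g a0 b]) <= exist _ (mix a0 a') (pX a')) = (mix a0 a <= mix a0 a') by [].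
by rewrite !mixle !lexx andbT /= (ord I a b a' b) lexx andbT.
Qed.

End Core3.

Section Core4.
Variables (dA dB dC dD : Order.disp_t).
Variables (A : finPOrderType dA) (B : finPOrderType dB) (C : finPOrderType dC) (D : finPOrderType dD).
Variable I : isoD A B C D.
Local Notation g := (fg I). Local Notation h := (fh I).
Local Notation p := (fp I). Local Notation q := (fq I).
Hypothesis conA : poset_connected A.
Variable a0 : A.

Definition tC (b : B) := [forall a, h a b == h a0 b].

Lemma tC_le b b' : b <= b' -> tC b = tC b'.
Proof.
move=> bb.
have gen (b1 b2 : B) : (forall u v, cmp u v -> h u b1 = h v b1 -> h u b2 = h v b2) -> tC b1 -> tC b2.
  move=> st /forallP t1; apply/forallP => a; apply/eqP.
  apply: (connect_tr (P := fun x => h x b2 = h a0 b2) (conA a0 a)) => // u v uv Pu.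
  by rewrite -Pu; apply/esym; apply: st; rewrite ?(eqP (t1 u)) ?(eqP (t1 v)) //; rewrite /cmp orbC.
apply/idP/idP; apply: gen => u v /orP[] uv E.
- exact: (@TI1 _ _ _ _ _ _ _ _ (swAB (swCD I)) b b' u v bb uv E).
- exact: esym (@TI1 _ _ _ _ _ _ _ _ (swAB (swCD I)) b b' v u bb uv (esym E)).
- exact: (@TI2 _ _ _ _ _ _ _ _ (swAB (swCD I)) b b' u v bb uv E).
- exact: esym (@TI2 _ _ _ _ _ _ _ _ (swAB (swCD I)) b b' v u bb uv (esym E)).
Qed.

Lemma tC_cmp b b' : cmp b b' -> tC b = tC b'.
Proof. by case/orP => bb; [ | apply/esym]; apply: tC_le. Qed.

Local Notation eC := (fun x y : C => (x <= y) || (y <= x)).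

Lemma tC_conn c c' d : connect eC c c' -> tC (q c d) = tC (q c' d).
Proof.
move=> cc; apply: (connect_tr (P := fun x => tC (q c d) = tC (q x d)) cc) => // u v uv ->.
apply: tC_cmp; case/orP: uv => uv; apply/orP; [left | right]; apply: (monoQ I) => //.
Qed.

Lemma symC : connect_sym eC.
Proof. by apply: sym_connect_sym => x y; rewrite orbC. Qed.

Variable d0 : D.
Hypothesis case1 : forall c, exists d, tC (q c d).

Definition rho (c : C) := odflt d0 [pick d | tC (q (root eC c) d)].

Lemma rho_spec c : tC (q c (rho c)).
Proof.
rewrite /rho; case: pickP => [d Hd | none] /=.
  by rewrite (tC_conn _ (connect_root _ c)).
by case: (case1 (root eC c)) => d Hd; move: (none d); rewrite Hd.
Qed.

Lemma rho_const c c' : connect eC c c' -> rho c = rho c'.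
Proof. by move=> cc; rewrite /rho (rootP symC cc). Qed.

Definition Yp := [pred b : B | tC b && (h a0 b == rho (g a0 b))].

Lemma hY (y : B) : Yp y -> forall a, h a y = rho (g a y).
Proof.
case/andP => /forallP t /eqP e a; rewrite (eqP (t a)) e.
exact: rho_const (L4 I conA a0 a y).
Qed.

Lemma Iso1 : order_iso (A *p subp Yp) C.
Proof.
have inY c : Yp (q c (rho c)).
  have t := rho_spec c; rewrite /Yp inE t /=.
  rewrite -(eqP (forallP t (p c (rho c)))) (pq_h I).
  by rewrite (rho_const (L4 I conA a0 (p c (rho c)) (q c (rho c)))) (pq_g I) eqxx.
exists (fun u : A *p subp Yp => g u.1 (val u.2)); split.
  exists (fun c => ((p c (rho c), (exist _ (q c (rho c)) (inY c) : subp Yp)) : A *p subp Yp)).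
    case=> a [y Yy] /=; congr pair; first by rewrite -(hY Yy a) (gh_p I).
    by apply: val_inj; rewrite /= -(hY Yy a) (gh_q I).
  by move=> c /=; rewrite (pq_g I).
case=> a [y Yy] [a' [y' Yy']] /=; rewrite le_pair.
have -> : ((exist _ y Yy : subp Yp) <= exist _ y' Yy') = (y <= y') by [].
rewrite -(ord I) andb_idr // => le.
rewrite (hY Yy) (hY Yy') (@rho_const (g a y) (g a' y')) //.
by apply: connect1; rewrite le.
Qed.

End Core4.

Lemma iso_empty d1 d2 (X : finPOrderType d1) (Y : finPOrderType d2) :
  #|X| = 0%N -> #|Y| = 0%N -> order_iso X Y.
Proof.
move=> /card0_eq X0 /card0_eq Y0.
have fX : X -> Y by move=> x; have := X0 x; rewrite inE.
have fY : Y -> X by move=> y; have := Y0 y; rewrite inE.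
exists fX; split; last by move=> x; have := X0 x; rewrite inE.
by exists fY => x; [have := X0 x | have := Y0 x]; rewrite inE.
Qed.

Lemma iso_mid d1 d2 d3 d4 (P : porderType d1) (Q : porderType d2) (R : porderType d3) (S : porderType d4) :
  order_iso ((P *p Q) *p (R *p S)) ((P *p R) *p (Q *p S)).
Proof.
pose f := fun x : (P *p Q) *p (R *p S) =>
  ((((x.1.1, x.2.1) : P *p R), ((x.1.2, x.2.2) : Q *p S)) : (P *p R) *p (Q *p S)).
pose g := fun x : (P *p R) *p (Q *p S) =>
  ((((x.1.1, x.2.1) : P *p Q), ((x.1.2, x.2.2) : R *p S)) : (P *p Q) *p (R *p S)).
exists f; split; first by exists g; case=> [[? ?] [? ?]].
case=> [[x1 x2] [x3 x4]] [[y1 y2] [y3 y4]]; rewrite /f /= !le_pair.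
by case: (x1 <= y1); case: (x2 <= y2); case: (x3 <= y3); case: (x4 <= y4).
Qed.

Lemma factor_connected d0 d1 d2 (A : finPOrderType d0) (W : finPOrderType d1) (X : finPOrderType d2) :
  poset_connected A -> order_iso A (W *p X) -> (0 < #|X|)%N -> poset_connected W.
Proof.
move=> conA [e [[e' ee' e'e] ele]] /card_gt0P[x0 _] w1 w2.
have := conA (e' ((w1, x0) : W *p X)) (e' ((w2, x0) : W *p X)) => cc.
have := connect_tr (P := fun a => connect (fun a b : W => (a <= b) || (b <= a)) w1 (e a).1) cc.
rewrite !e'e /=; apply; first exact: connect0.
move=> u v uv Pu; apply: connect_trans Pu (connect1 _).
by case/orP: uv; rewrite -ele leEprod => /andP[l _]; rewrite l ?orbT.
Qed.

Lemma isoD_of d1 d2 d3 d4 (A : finPOrderType d1) (B : finPOrderType d2)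
  (C : finPOrderType d3) (D : finPOrderType d4) :
  order_iso (A *p B) (C *p D) -> inhabited (isoD A B C D).
Proof.
case=> f [[f' ff' f'f] fle]; constructor.
refine (@IsoD _ _ _ _ A B C D (fun a b => (f ((a, b) : A *p B)).1) (fun a b => (f ((a, b) : A *p B)).2)
  (fun c d => (f' ((c, d) : C *p D)).1) (fun c d => (f' ((c, d) : C *p D)).2) _ _ _ _ _).
- by move=> c d; rewrite -surjective_pairing f'f.
- by move=> c d; rewrite -surjective_pairing f'f.
- by move=> a b; rewrite -surjective_pairing ff'.
- by move=> a b; rewrite -surjective_pairing ff'.
- move=> a b a' b'.
  by have := fle ((a, b) : A *p B) ((a', b') : A *p B); rewrite !leEprod.
Qed.

Lemma all_of_card d (A : finPOrderType d) (P : pred A) :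
  #|{: subp P}| = #|A| -> forall a, P a.
Proof.
rewrite card_sig => E a; apply/negPn/negP => Pa.
have := cardC [pred x | P x]; rewrite E => /eqP; rewrite -{2}[#|A|]addn0 eqn_add2l.
by move/eqP/card0_eq/(_ a); rewrite !inE Pa.
Qed.

Lemma dichot dA dB dC dD (A : finPOrderType dA) (B : finPOrderType dB)
  (C : finPOrderType dC) (D : finPOrderType dD)
  (indec : forall dW dX (W : finPOrderType dW) (X : finPOrderType dX),
      order_iso A (W *p X) -> (#|W| < 2)%N \/ (#|X| < 2)%N)
  (I : isoD A B C D) (conA : poset_connected A) (a0 : A) (b : B) :
  tC I a0 b || tC (swCD I) a0 b.
Proof.
have iA := L6 I conA b a0.
have cA := iso_card iA; rewrite card_p in cA.
have A0 : (0 < #|A|)%N by apply/card_gt0P; exists a0.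
case: (indec _ _ _ _ iA) => small.
- have W1 : #|{: subp [pred a : A | fh I a b == fh I a0 b]}| = 1%N.
    move: small A0; rewrite cA; case: #|{: subp _}| => [|[|]] //.
  rewrite W1 mul1n in cA.
  apply/orP; right; apply/forallP => a; exact: (all_of_card (esym cA)).
- have X1 : #|{: subp [pred a : A | fg I a b == fg I a0 b]}| = 1%N.
    move: small A0; rewrite cA; case: #|{: subp [pred a : A | fg I a b == fg I a0 b]}| => [|[|]] //.
    by rewrite muln0.
  rewrite X1 muln1 in cA.
  apply/orP; left; apply/forallP => a; exact: (all_of_card (esym cA)).
Qed.

Definition refines dA dB dC dD (A : finPOrderType dA) (B : finPOrderType dB)
  (C : finPOrderType dC) (D : finPOrderType dD) :=
  exists (dW dX dY dZ : Order.disp_t)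
         (W : finPOrderType dW) (X : finPOrderType dX)
         (Y : finPOrderType dY) (Z : finPOrderType dZ),
    [/\ order_iso A (W *p X), order_iso B (Y *p Z),
        order_iso C (W *p Y) & order_iso D (X *p Z)].

Theorem main n : forall dA dB dC dD (A : finPOrderType dA) (B : finPOrderType dB)
  (C : finPOrderType dC) (D : finPOrderType dD),
  (#|A| <= n)%N -> poset_connected A -> (0 < #|A|)%N ->
  order_iso (A *p B) (C *p D) -> refines A B C D.
Proof.
elim: n => [|n IH] dA dB dC dD A B C D An conA A0 iso.
  by move: A0; rewrite lt0n -leqn0 An.
have cI := iso_card iso; rewrite !card_p in cI.
case: (classic (exists dW dX (W : finPOrderType dW) (X : finPOrderType dX),
    order_iso A (W *p X) /\ (1 < #|W|)%N /\ (1 < #|X|)%N)).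
  case=> dW [dX [W [X [iA [W2 X2]]]]].
  have cA := iso_card iA; rewrite card_p in cA.
  have W0 : (0 < #|W|)%N by apply: ltn_trans W2.
  have X0 : (0 < #|X|)%N by apply: ltn_trans X2.
  have Wn : (#|W| <= n)%N by rewrite -ltnS; apply: leq_trans An; rewrite cA ltn_Pmulr.
  have Xn : (#|X| <= n)%N by rewrite -ltnS; apply: leq_trans An; rewrite cA ltn_Pmull.
  have conW := factor_connected conA iA X0.
  have conX := factor_connected conA (iso_trans iA (iso_comm _ _)) W0.
  have iso1 : order_iso (W *p (X *p B)) (C *p D).
    exact: iso_trans (iso_sym (iso_assoc _ _ _)) (iso_trans (iso_prod (iso_sym iA) (iso_refl B)) iso).
  have [dW' [dX' [dY' [dZ' [W' [X' [Y' [Z' [i1 i2 i3 i4]]]]]]]]] := IH _ _ _ _ W _ C D Wn conW W0 iso1.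
  have [dW'' [dX'' [dY'' [dZ'' [W'' [X'' [Y'' [Z'' [j1 j2 j3 j4]]]]]]]]] := IH _ _ _ _ X B Y' Z' Xn conX X0 i2.
  exists _, _, _, _, (W' *p W''), (X' *p X''), Y'', Z''; split.
  - exact: iso_trans iA (iso_trans (iso_prod i1 j1) (iso_mid _ _ _ _)).
  - exact: j2.
  - exact: iso_trans i3 (iso_trans (iso_prod (iso_refl W') j3) (iso_sym (iso_assoc _ _ _))).
  - exact: iso_trans i4 (iso_trans (iso_prod (iso_refl X') j4) (iso_sym (iso_assoc _ _ _))).
move=> nd.
have indec dW dX (W : finPOrderType dW) (X : finPOrderType dX) :
    order_iso A (W *p X) -> (#|W| < 2)%N \/ (#|X| < 2)%N.
  move=> iW; case: (ltnP 1 #|W|) => w; last by left.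
  case: (ltnP 1 #|X|) => x; last by right.
  by case: nd; exists dW, dX, W, X.
case/card_gt0P: (A0) => a0 _.
case: (posnP #|D|) => [D0 | Dpos].
  have B0 : #|B| = 0%N by move: cI; rewrite D0 muln0 => /eqP; rewrite muln_eq0 eqn0Ngt A0 /= => /eqP.
  exists _, _, _, _, ('I_1), A, C, D; split.
  - exact: iso_unitl.
  - by apply: iso_empty; rewrite ?card_p ?D0 ?muln0.
  - exact: iso_unitl.
  - by apply: iso_empty; rewrite ?card_p ?D0 ?muln0.
case: (posnP #|C|) => [C0 | Cpos].
  have B0 : #|B| = 0%N by move: cI; rewrite C0 mul0n => /eqP; rewrite muln_eq0 eqn0Ngt A0 /= => /eqP.
  exists _, _, _, _, A, ('I_1), C, D; split.
  - exact: iso_unitr.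
  - by apply: iso_empty; rewrite ?card_p ?C0 ?mul0n.
  - by apply: iso_empty; rewrite ?card_p ?C0 ?muln0.
  - exact: iso_unitl.
case/card_gt0P: Dpos => d0 _; case/card_gt0P: Cpos => c0 _.
have [I] := isoD_of iso.
have dich := dichot indec I conA a0.
case: (boolP [forall c, [exists d, tC I a0 (fq I c d)]]) => [H1 | H2].
  have c1 : forall c, exists d, tC I a0 (fq I c d).
    by move=> c; have /existsP[d Hd] := forallP H1 c; exists d.
  have iY := Iso1 conA d0 c1.
  exists _, _, _, _, A, ('I_1), (subp (Yp I a0 d0)), D; split.
  - exact: iso_unitr.
  - apply: (cancellation A0).
    exact: iso_trans iso (iso_trans (iso_prod (iso_sym iY) (iso_refl D)) (iso_assoc _ _ _)).
  - exact: iso_sym iY.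
  - exact: iso_unitl.
have [c1 Hc1] : exists c, forall d, ~~ tC I a0 (fq I c d).
  move: H2; rewrite negb_forall => /existsP[c]; rewrite negb_exists => /forallP Hc.
  by exists c.
have c2 : forall d, exists c, tC (swCD I) a0 (fq (swCD I) d c).
  move=> d; exists c1; have := dich (fq I c1 d); by rewrite (negbTE (Hc1 d)).
have iZ := Iso1 conA c0 c2.
exists _, _, _, _, ('I_1), A, C, (subp (Yp (swCD I) a0 c0)); split.
- exact: iso_unitl.
- apply: (cancellation A0).
  apply: iso_trans iso _.
  apply: iso_trans (iso_prod (iso_refl C) (iso_sym iZ)) _.
  apply: iso_trans (iso_sym (iso_assoc _ _ _)) _.
  exact: iso_trans (iso_prod (iso_comm _ _) (iso_refl _)) (iso_assoc _ _ _).
- exact: iso_unitl.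
- exact: iso_sym iZ.
Qed.

Theorem theorem5
  (dA dB dC dD : Order.disp_t)
  (A : finPOrderType dA) (B : finPOrderType dB)
  (C : finPOrderType dC) (D : finPOrderType dD) :
  poset_connected A -> (0 < #|A|)%N ->
  order_iso (A *p B) (C *p D) ->
  exists (dW dX dY dZ : Order.disp_t)
         (W : finPOrderType dW) (X : finPOrderType dX)
         (Y : finPOrderType dY) (Z : finPOrderType dZ),
    [/\ order_iso A (W *p X), order_iso B (Y *p Z),
        order_iso C (W *p Y) & order_iso D (X *p Z)].
Proof. by move=> conA A0 iso; apply: (main (leqnn #|A|) conA A0 iso). Qed.
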